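(* Let $G$ be a bipartite distance-regular graph of diameter $d$ which is an antipodal double cover, and let $B$ be its tridiagonal intersection matrix. If $\ker B\neq 0$, then $d$ is even. Moreover, in this case $\ker B$ has a basis consisting of a single vector $\boldsymbol{u}=(u_0,u_1,\dots,u_d)^T$ with $u_0=1$, $u_1=0$ and $u_d=(-1)^{d/2}$.
   Context: A connected graph $G$ of diameter $d$ is distance-regular if there are non-negative integers $b_i,c_i$ ($0\le i\le d$) such that for any two vertices $x,y$ at distance $i$, $y$ has exactly $c_i$ neighbours at distance $i-1$ from $x$ and exactly $b_i$ neighbours at distance $i+1$ from $x$. $G$ is $r$-regular with $r=b_0$, $c_0=b_d=0$, $c_1=1$, and $a_i=r-b_i-c_i$. $B$ is the $(d+1)\times(d+1)$ tridiagonal matrix indexed by $0,\dots,d$ with $B_{i,i}=a_i$, $B_{i,i+1}=c_{i+1}$, $B_{i+1,i}=b_i$, all other entries $0$. $G$ is an antipodal double cover if for every vertex $x$ there is exactly one vertex at distance $d$ from $x$. *)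

(* Defs.v *)
From mathcomp Require Import all_boot all_order all_algebra.
Set Implicit Arguments. Unset Strict Implicit. Unset Printing Implicit Defensive.
Import Order.TTheory GRing.Theory Num.Theory.
Local Open Scope ring_scope.

Definition simple_graph (T : finType) (e : rel T) : Prop :=
  symmetric e /\ irreflexive e.

Fixpoint ball (T : finType) (e : rel T) (n : nat) (x : T) : {set T} :=
  match n with
  | 0 => [set x]
  | n'.+1 => ball e n' x :|: [set y | [exists z in ball e n' x, e z y]]
  end.

(* Path distance: least n with y in ball n x (equals #|T| if unreachable). *)
Definition gdist (T : finType) (e : rel T) (x y : T) : nat :=
  find (fun n => y \in ball e n x) (iota 0 #|T|).

Definition gconnected (T : finType) (e : rel T) : Prop :=
  forall x y : T, exists n, y \in ball e n x.

Definition has_diameter (T : finType) (e : rel T) (d : nat) : Prop :=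
  (forall x y : T, (gdist e x y <= d)%N) /\ exists x y : T, gdist e x y = d.

Definition distance_regular (T : finType) (e : rel T) (d : nat)
    (b c : nat -> nat) : Prop :=
  [/\ simple_graph e, gconnected e, has_diameter e d,
      [/\ c 0 = 0, b d = 0 & c 1 = 1] &
      forall x y : T,
        #|[set z | e y z & gdist e x z == (gdist e x y).-1]| = c (gdist e x y)
        /\ #|[set z | e y z & gdist e x z == (gdist e x y).+1]| = b (gdist e x y)].

Definition bipartite (T : finType) (e : rel T) : Prop :=
  exists f : T -> bool, forall x y, e x y -> f x != f y.

Definition antipodal_double_cover (T : finType) (e : rel T) (d : nat) : Prop :=
  forall x : T, #|[set y | gdist e x y == d]| = 1.

(* a_i = r - b_i - c_i with r = b_0 (computed in R, no truncation). *)
Definition inter_a (R : nzRingType) (b c : nat -> nat) (i : nat) : R :=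
  (b 0)%:R - (b i)%:R - (c i)%:R.

Definition inter_matrix (R : nzRingType) (d : nat) (b c : nat -> nat)
    : 'M[R]_d.+1 :=
  \matrix_(i < d.+1, j < d.+1)
    if i == j :> nat then inter_a R b c i
    else if j == i.+1 :> nat then (c j)%:R
    else if i == j.+1 :> nat then (b j)%:R
    else 0.

(* Main.v *)
Require Import Defs.
From mathcomp Require Import all_boot all_order all_algebra.
From mathcomp Require Import zify ring.
Import GRing.Theory Num.Theory.
Set Implicit Arguments. Unset Strict Implicit.

Section Graph.
Variables (T : finType) (e : rel T).

Lemma ballS n x y : (y \in ball e n.+1 x) = (y \in ball e n x) || [exists z in ball e n x, e z y].
Proof. by rewrite /= in_setU in_set. Qed.

Lemma ball_mono m n x : (m <= n)%N -> ball e m x \subset ball e n x.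
Proof.
move=> /subnK <-; elim: (n - m)%N => [|k IH] //=.
by apply: subset_trans IH (subsetUl _ _).
Qed.

Arguments ball_mono {m n} x _.

Lemma ball_stab n x k : ball e n.+1 x = ball e n x -> ball e (k + n) x = ball e n x.
Proof.
move=> H; elim: k => [|k IH] //=.
by rewrite IH; apply: H.
Qed.

Lemma ball_grow x n : (n < #|ball e n x|)%N \/ exists2 k, (k < n)%N & ball e k.+1 x = ball e k x.
Proof.
elim: n => [|n [IH|[k Hk Hk']]].
- by left; rewrite cards1.
- have [E|NE] := eqVneq (ball e n.+1 x) (ball e n x).
    by right; exists n.
  left. have := subset_leqif_cards (ball_mono x (leqnSn n)).
  move=> [Hle Heq]. rewrite eq_sym in NE. rewrite (negbTE NE) in Heq.
  have: (#|ball e n x| < #|ball e n.+1 x|)%N by rewrite ltn_neqAle Heq Hle.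
  lia.
- by right; exists k => //; lia.
Qed.

Lemma ball_small x y n : y \in ball e n x -> exists2 k, (k < #|T|)%N & ((k <= n)%N /\ y \in ball e k x).
Proof.
move=> Hy.
case: (ball_grow x #|T|) => [H|[k Hk Hst]].
  by move: H; rewrite ltnNge max_card.
case: (leqP n k) => Hnk.
  by exists n => //; lia.
exists k => //; split; first lia.
by rewrite -(@ball_stab k x (n - k) Hst) subnK //; lia.
Qed.

Lemma gdist_le x y n : y \in ball e n x -> (gdist e x y <= n)%N.
Proof.
move=> /ball_small [k Hk [Hkn Hy]].
suff: (gdist e x y <= k)%N by lia.
rewrite leqNgt; apply/negP => /(before_find 0).
by rewrite nth_iota // add0n Hy.
Qed.

Lemma gdist_in x y n : y \in ball e n x -> y \in ball e (gdist e x y) x.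
Proof.
move=> /ball_small [k Hk [Hkn Hy]].
have Hh : has (fun n => y \in ball e n x) (iota 0 #|T|).
  by apply/hasP; exists k => //; rewrite mem_iota.
have := nth_find 0 Hh. rewrite nth_iota //.
by move: Hh; rewrite has_find size_iota.
Qed.

Hypothesis esym : symmetric e.
Hypothesis eirr : irreflexive e.
Hypothesis econ : gconnected e.

Lemma ballP x y n : (y \in ball e n x) = (gdist e x y <= n)%N.
Proof.
apply/idP/idP; first exact: gdist_le.
move=> H; have [m Hm] := econ x y.
exact: (subsetP (ball_mono x H) _ (gdist_in Hm)).
Qed.

Lemma ball_cons y z w n : e y z -> w \in ball e n z -> w \in ball e n.+1 y.
Proof.
move=> Hyz; elim: n w => [|n IH] w.
  move=> Hw; have -> : w = z by move: Hw; rewrite /= in_set1 => /eqP.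
  rewrite ballS; apply/orP; right.
  by apply/existsP; exists y; rewrite /= in_set1 eqxx.
rewrite ballS => /orP [/IH H|/existsP [w' /andP [H1 H2]]].
  by rewrite ballS H.
rewrite ballS; apply/orP; right; apply/existsP; exists w'.
by rewrite IH.
Qed.

Lemma ball_sym x y n : y \in ball e n x -> x \in ball e n y.
Proof.
elim: n y => [|n IH] y.
  by rewrite /= !in_set1 eq_sym.
rewrite ballS => /orP [/IH H|/existsP [z /andP [H1 H2]]].
  exact: (subsetP (ball_mono y (leqnSn n))).
apply: (ball_cons (z := z)); first by rewrite esym.
exact: IH.
Qed.

Lemma ball_trans x y z a b : y \in ball e a x -> z \in ball e b y -> z \in ball e (a + b) x.
Proof.
move=> Hy; elim: b z => [|b IH] z.
  by rewrite /= in_set1 addn0 => /eqP ->.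
rewrite ballS addnS => /orP [/IH H|/existsP [w /andP [H1 H2]]].
  by rewrite ballS H.
by rewrite ballS; apply/orP; right; apply/existsP; exists w; rewrite IH.
Qed.

Lemma gdistC x y : gdist e x y = gdist e y x.
Proof.
apply/eqP; rewrite eqn_leq -!ballP; apply/andP; split; apply: ball_sym; rewrite ballP //.
Qed.

Lemma gdist_tri x y z : (gdist e x z <= gdist e x y + gdist e y z)%N.
Proof.
rewrite -ballP; apply: (ball_trans (y := y)); by rewrite ballP.
Qed.

Lemma gdist_edge x y z : e y z -> (gdist e x z <= (gdist e x y).+1)%N.
Proof.
move=> H; apply: leq_trans (gdist_tri x y z) _.
suff: (gdist e y z <= 1)%N by lia.
rewrite -ballP; apply: (ball_cons H); by rewrite /= in_set1.
Qed.

Lemma gdist0 x : gdist e x x = 0%N.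
Proof. by apply/eqP; rewrite -leqn0 -ballP /= in_set1. Qed.

Lemma gdist0_eq x y : gdist e x y = 0%N -> y = x.
Proof. move=> H; have : y \in ball e 0 x by rewrite ballP H.
by rewrite /= in_set1 => /eqP. Qed.

Lemma gdist_pred x y n : gdist e x y = n.+1 -> exists z, e z y /\ gdist e x z = n.
Proof.
move=> H; have : y \in ball e n.+1 x by rewrite ballP H.
rewrite ballS => /orP [|/existsP [z /andP [H1 H2]]].
  by rewrite ballP H ltnn.
exists z; split => //.
move: H1; rewrite ballP => H1.
have := gdist_edge x H2. lia.
Qed.

Lemma gdist_all x y n i : gdist e x y = n -> (i <= n)%N -> exists y', gdist e x y' = i.
Proof.
elim: n y => [|n IH] y H Hi.
  by exists y; move: Hi; rewrite leqn0 H => /eqP.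
case: (eqVneq i n.+1) => [->|Hne]; first by exists y.
have [z [_ Hz]] := gdist_pred H.
by apply: (IH z) => //; lia.
Qed.


Variables (d : nat) (b c : nat -> nat).
Hypothesis hdiam : has_diameter e d.
Hypothesis hreg : forall x y : T,
        #|[set z | e y z & gdist e x z == (gdist e x y).-1]| = c (gdist e x y)
        /\ #|[set z | e y z & gdist e x z == (gdist e x y).+1]| = b (gdist e x y).
Hypothesis hc0 : c 0 = 0%N.
Hypothesis hbip : bipartite e.
Hypothesis hanti : antipodal_double_cover e d.

Lemma exists_dist i : (i <= d)%N -> exists x y, gdist e x y = i.
Proof.
move=> Hi; have [_ [x [y Hxy]]] := hdiam.
have [y' Hy'] := gdist_all Hxy Hi. by exists x, y'.
Qed.

Lemma degree y : #|[set z | e y z]| = b 0.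
Proof.
have [_ Hb] := hreg y y; rewrite gdist0 in Hb; rewrite -Hb.
apply: eq_card => z; rewrite !in_set.
case Hyz: (e y z) => //=.
have := gdist_edge y Hyz; rewrite gdist0 => H1.
symmetry; apply/eqP; suff: gdist e y z <> 0%N by lia.
by move/gdist0_eq => Ez; rewrite Ez eirr in Hyz.
Qed.

Lemma parity (f : T -> bool) (Hf : forall x y, e x y -> f x != f y) x y :
  odd (gdist e x y) = (f x != f y).
Proof.
move Hn : (gdist e x y) => n; elim: n y Hn => [|n IH] y Hn.
  by rewrite (gdist0_eq Hn) eqxx.
have [z [Hzy Hz]] := gdist_pred Hn.
have Hfz := Hf _ _ Hzy. rewrite /= (IH z Hz).
by move: Hfz; case: (f x); case: (f y); case: (f z).
Qed.

Lemma nb_dist x y z : e y z -> gdist e x z != gdist e x y.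
Proof.
move=> H; apply/negP => /eqP E.
have [f Hf] := hbip.
have := parity Hf x z; rewrite E (parity Hf).
have := Hf _ _ H.
by case: (f x); case: (f y); case: (f z).
Qed.

Lemma F1 i : (1 <= i <= d)%N -> b 0 = (b i + c i)%N.
Proof.
move=> /andP [H1 H2]; have [x [y Hxy]] := exists_dist H2.
have [Hc Hb] := hreg x y; rewrite Hxy in Hc Hb.
rewrite -Hc -Hb -(degree y) addnC -cardsUI.
have -> : [set z | e y z & gdist e x z == i.-1] :&: [set z | e y z & gdist e x z == i.+1] = set0.
  apply/setP => z; rewrite !in_set; apply/negP => /andP [/andP [_ /eqP E1] /andP [_ /eqP E2]].
  lia.
rewrite cards0 addn0; apply: eq_card => z; rewrite !in_set.
case Hyz : (e y z) => //=.
have Hzy : e z y by rewrite esym.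
have := gdist_edge x Hyz; have := gdist_edge x Hzy; have := nb_dist x Hyz.
rewrite Hxy => /eqP Hne Ha Hb'.
symmetry; apply/orP; lia.
Qed.


Lemma F2 i : (1 <= i <= d)%N -> (0 < c i)%N.
Proof.
move=> /andP [H1 H2]; have [x [y Hxy]] := exists_dist H2.
have [Hc _] := hreg x y; rewrite Hxy in Hc; rewrite -Hc.
have Hi : i = i.-1.+1 by lia.
rewrite Hi in Hxy; have [z [Hzy Hz]] := gdist_pred Hxy.
apply/card_gt0P; exists z; rewrite !in_set Hz eqxx andbT.
by rewrite esym.
Qed.

Lemma F3 i : (i < d)%N -> (0 < b i)%N.
Proof.
move=> H; have [x [y Hxy]] := exists_dist H.
have [z [Hzy Hz]] := gdist_pred Hxy.
have [_ Hb] := hreg x z; rewrite Hz in Hb; rewrite -Hb.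
by apply/card_gt0P; exists y; rewrite !in_set Hzy Hxy eqxx.
Qed.

Lemma gdist_le_d x y : (gdist e x y <= d)%N.
Proof. by case: hdiam. Qed.

Lemma go_up x k : forall z, (gdist e x z + k = d)%N ->
  exists w, gdist e x w = d /\ (gdist e z w <= k)%N.
Proof.
elim: k => [|k IH] z Hz.
  by exists z; rewrite gdist0; split => //; lia.
have Hlt : (gdist e x z < d)%N by lia.
have := F3 Hlt; have [_ <-] := hreg x z.
move=> /card_gt0P [z' ]; rewrite !in_set => /andP [Hzz' /eqP Hz'].
have [w [Hw1 Hw2]] := IH z' ltac:(lia).
exists w; split => //.
apply: leq_trans (gdist_tri z z' w) _.
have := gdist_edge z Hzz'; rewrite gdist0. lia.
Qed.

Lemma antipode x : exists x', forall z, gdist e x' z = (d - gdist e x z)%N.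
Proof.
have /eqP /cards1P [x' Hx'] := hanti x.
have Hxx' : gdist e x x' = d.
  have : x' \in [set y | gdist e x y == d] by rewrite Hx' set11.
  by rewrite in_set => /eqP.
exists x' => z.
have [w [Hw1 Hw2]] := @go_up x (d - gdist e x z) z ltac:(have := gdist_le_d x z; lia).
have Ew : w = x'.
  have : w \in [set y | gdist e x y == d] by rewrite in_set Hw1.
  by rewrite Hx' in_set1 => /eqP.
rewrite Ew in Hw2.
have := gdist_tri x z x'. rewrite Hxx' (gdistC z x') => Ht.
rewrite (gdistC z x') in Hw2. lia.
Qed.

Lemma F4 i : (i < d)%N -> b i = c (d - i).
Proof.
move=> H; have [x [y Hxy]] := exists_dist (ltnW H).
have [x' Hx'] := antipode x.
have [_ Hb] := hreg x y; have [Hc _] := hreg x' y.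
rewrite Hxy in Hb; rewrite Hx' Hxy in Hc.
rewrite -Hb -Hc; apply: eq_card => z; rewrite !in_set Hx'.
case: (e y z) => //=.
move: (gdist_le_d x z) => Hle.
by apply/eqP/eqP; lia.
Qed.

End Graph.
Local Open Scope ring_scope.
Section Lin.
Variables (R : realFieldType) (d : nat) (b c : nat -> nat).
Local Notation A := (inter_a R b c).
Local Notation B := (inter_matrix R d b c).

Lemma sum_delta N k : \sum_(j < N) (((j : nat) == k)%:R : R) = (k < N)%N%:R.
Proof.
elim: N => [|N IH]; first by rewrite big_ord0.
rewrite big_ord_recr /= IH.
case: (ltngtP k N) => H.
- have -> : (k < N.+1)%N by lia.
  by rewrite addr0.
- have -> : (k < N.+1)%N = false by lia.
  by rewrite addr0.
- by rewrite H ltnS leqnn add0r.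
Qed.

Lemma entry (f : nat -> R) (m n : nat) :
  (if n == m then A n else if m == n.+1 then (c m)%:R else if n == m.+1 then (b m)%:R else 0) * f m
  = (m == n)%:R * (A n * f n) + (m == n.+1)%:R * ((c n.+1)%:R * f n.+1)
    + (m == n.-1)%:R * ((0 < n)%N%:R * ((b n.-1)%:R * f n.-1)).
Proof.
case: (eqVneq n m) => [<-|Hnm].
  rewrite ?eqxx. have -> : (n == n.+1) = false by lia.
  case: n => [|n] /=; first by rewrite !(mul0r, mul1r, mulr0, addr0).
  have -> : (n.+1 == n) = false by lia.
  by rewrite !mul0r !addr0 mul1r.
rewrite mul0r add0r.
case: (eqVneq m n.+1) => [->|Hm1].
  have -> : (n.+1 == n.-1) = false by lia.
  by rewrite mul0r addr0 mul1r.
rewrite mul0r add0r.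
case: (eqVneq n m.+1) => [->|Hm2].
  by rewrite /= eqxx !mul1r.
have -> : (m == n.-1) = false by lia.
by rewrite !mul0r.
Qed.

Lemma rowB (f : nat -> R) (v : 'cV[R]_d.+1) (Hv : forall j : 'I_d.+1, v j 0 = f j) (i : 'I_d.+1) :
  (B *m v) i 0 = (0 < i)%N%:R * ((b i.-1)%:R * f i.-1) + A i * f i
                 + (i.+1 < d.+1)%N%:R * ((c i.+1)%:R * f i.+1).
Proof.
rewrite mxE.
under eq_bigr => j _ do rewrite mxE Hv entry.
rewrite !big_split /= -!mulr_suml !sum_delta ltn_ord.
have -> : (i.-1 < d.+1)%N by have := ltn_ord i; lia.
rewrite !mul1r; set x := _ * f i; set y := _ * (_ * f i.+1); set z := _ * (_ * f i.-1).
by rewrite addrC addrA.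
Qed.


Definition V (v : 'cV[R]_d.+1) (n : nat) : R := v (inord n) 0.

Lemma HV (v : 'cV[R]_d.+1) (j : 'I_d.+1) : v j 0 = V v j.
Proof. by rewrite /V inord_val. Qed.

Lemma ker_row (v : 'cV[R]_d.+1) : B *m v = 0 -> forall n, (n <= d)%N ->
  (0 < n)%N%:R * ((b n.-1)%:R * V v n.-1) + A n * V v n + (n < d)%N%:R * ((c n.+1)%:R * V v n.+1) = 0.
Proof.
move=> H n Hn.
have := congr1 (fun M : 'M[R]_(d.+1,1) => M (inord n) 0) H; by rewrite (rowB (HV v)) mxE inordK.
Qed.

Lemma ker_of (f : nat -> R) (v : 'cV[R]_d.+1) (Hv : forall j : 'I_d.+1, v j 0 = f j) :
  (forall n, (n <= d)%N ->
  (0 < n)%N%:R * ((b n.-1)%:R * f n.-1) + A n * f n + (n < d)%N%:R * ((c n.+1)%:R * f n.+1) = 0) ->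
  B *m v = 0.
Proof.
move=> H; apply/matrixP => i j; rewrite ord1 (rowB Hv) mxE ltnS.
by apply: H; rewrite -ltnS.
Qed.

Fixpoint w (n : nat) : R :=
  match n with
  | 0 => 1
  | 1 => 0
  | k.+2 => - ((b k)%:R / (c k.+2)%:R) * w k
  end.

Hypothesis hA : forall n, (n <= d)%N -> A n = 0.
Hypothesis hc : forall n, (0 < n <= d)%N -> (0 < c n)%N.
Hypothesis hb : forall n, (n < d)%N -> (0 < b n)%N.
Hypothesis hbc : forall n, (n < d)%N -> b n = c (d - n).

Lemma cnz n : (0 < n <= d)%N -> (c n)%:R != 0 :> R.
Proof. by move/hc; rewrite pnatr_eq0 -lt0n. Qed.

Lemma bnz n : (n < d)%N -> (b n)%:R != 0 :> R.
Proof. by move/hb; rewrite pnatr_eq0 -lt0n. Qed.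

Lemma wSS n : w n.+2 = - ((b n)%:R / (c n.+2)%:R) * w n.
Proof. by []. Qed.

Lemma w_odd k : w k.*2.+1 = 0.
Proof. by elim: k => [|k IH] //; rewrite doubleS wSS IH mulr0. Qed.

Lemma w_even k : (k.*2 <= d)%N -> w k.*2 != 0.
Proof.
elim: k => [|k IH] Hk; first exact: oner_neq0.
rewrite doubleS wSS mulf_neq0 ?IH //; last by move: Hk; rewrite doubleS; lia.
rewrite oppr_eq0 mulf_neq0 // ?invr_eq0.
  by apply: bnz; move: Hk; rewrite doubleS; lia.
by apply: cnz; move: Hk; rewrite doubleS; lia.
Qed.

Lemma ker_unique (v : 'cV[R]_d.+1) : B *m v = 0 -> forall n, (n <= d)%N -> V v n = V v 0 * w n.
Proof.
move=> H.
suff: forall n, (n <= d)%N -> V v n = V v 0 * w n /\ ((n < d)%N -> V v n.+1 = V v 0 * w n.+1).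
  by move=> S n Hn; case: (S n Hn).
elim => [|n IH] Hn.
  split; first by rewrite mulr1.
  move=> Hd; have := ker_row H (leq0n d); rewrite hA // Hd mul0r mul0r add0r mul1r.
  rewrite add0r; move/eqP; rewrite mulf_eq0 (negbTE (cnz (n:=1) _)) /=; last by lia.
  by move/eqP ->; rewrite mulr0.
have [_ IH2] := IH (ltnW Hn).
split; first exact: IH2.
move=> Hd.
have := ker_row H Hn; rewrite hA // mul0r addr0 Hd /= !mul1r.
have [IH1 _] := IH (ltnW Hn).
rewrite IH1 => E.
have Hc2 := cnz (n := n.+2) ltac:(lia).
apply: (mulfI Hc2).
rewrite -(addr0_eq E).
by field.
Qed.


Lemma ker_zero (v : 'cV[R]_d.+1) : B *m v = 0 -> V v 0 = 0 -> v = 0.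
Proof.
move=> H H0; apply/matrixP => i j; rewrite ord1 HV ker_unique // ?H0 ?mul0r ?mxE //.
by rewrite -ltnS.
Qed.

Lemma odd_case : odd d -> (exists2 u : 'cV[R]_d.+1, u != 0 & B *m u = 0) -> False.
Proof.
move=> Hodd [u Hu Hk].
have Hd : (0 < d)%N by case: d Hodd.
have := ker_row Hk (leqnn d); rewrite hA // ltnn Hd mul0r addr0 mul1r.
rewrite mul0r addr0 => /eqP; rewrite mulf_eq0 (negbTE (bnz _)); last by lia.
rewrite /= (ker_unique Hk); last by lia.
rewrite mulf_eq0.
have Hdd : d.-1 = (d./2).*2.
  have := odd_double_half d; rewrite Hodd; lia.
rewrite Hdd (negbTE (w_even _)) ?orbF; last by rewrite -Hdd; lia.
by move=> /eqP H0; move/eqP: Hu; apply; apply: ker_zero.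
Qed.

Lemma w_formula k : (k.*2 <= d)%N ->
  w k.*2 * \prod_(j < k) ((c (j.*2.+2))%:R : R) = (-1) ^+ k * \prod_(j < k) ((b j.*2)%:R : R).
Proof.
elim: k => [|k IH] Hk; first by rewrite !big_ord0 !mulr1.
rewrite doubleS wSS !big_ord_recr /=.
have Hc2 := cnz (n := k.*2.+2) ltac:(move: Hk; rewrite doubleS; lia).
have E := IH ltac:(move: Hk; rewrite doubleS; lia).
rewrite exprS.
transitivity (- (b k.*2)%:R * (w k.*2 * \prod_(j < k) ((c (j.*2.+2))%:R : R))).
  by field.
by rewrite E; ring.
Qed.

Lemma w_d : ~~ odd d -> w d = (-1) ^+ (d./2).
Proof.
move=> Hev.
have Hd : d = (d./2).*2 by have := odd_double_half d; rewrite (negbTE Hev).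
set m := d./2 in Hd *.
have := w_formula (k := m) ltac:(lia).
have -> : \prod_(j < m) ((b j.*2)%:R : R) = \prod_(j < m) ((c (j.*2.+2))%:R : R).
  rewrite (reindex_inj rev_ord_inj) /=; apply: eq_bigr => j _.
  rewrite hbc /=; last by have := ltn_ord j; lia.
  congr ((c _)%:R); have := ltn_ord j; lia.
rewrite -Hd => E; apply: (mulIf _ E).
rewrite prodf_seq_neq0; apply/allP => j _ /=.
apply: cnz; have := ltn_ord j; lia.
Qed.


Lemma u_ker : ~~ odd d -> B *m (\col_(i < d.+1) w i) = 0.
Proof.
move=> Hev.
apply: (ker_of (f := w)) => [j|n Hn]; first by rewrite mxE.
case: n Hn => [|k] Hk.
  have -> : w 1 = 0 by [].
  by rewrite hA // !(mul0r, mulr0, add0r).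
rewrite hA // mul0r addr0 /=.
case: (ltnP k.+1 d) => Hlt.
  have Hc2 := cnz (n := k.+2) ltac:(lia).
  rewrite (_ : true%:R = 1) //.
  by field.
have Ek : k.+1 = d by lia.
have Hko : k = (k./2).*2.+1.
  have := odd_double_half k.
  have : odd k by move: Hev; rewrite -Ek /= negbK.
  by move=> ->; lia.
by rewrite Hko w_odd !(mul0r, mulr0, addr0).
Qed.

End Lin.
Local Open Scope ring_scope.

Theorem lemma2p4 (R : realFieldType) (T : finType) (e : rel T) (d : nat)
    (b c : nat -> nat) :
  distance_regular e d b c -> bipartite e -> antipodal_double_cover e d ->
  (exists2 u : 'cV[R]_d.+1, u != 0 & inter_matrix R d b c *m u = 0) ->
  ~~ odd d /\
  exists u : 'cV[R]_d.+1,
    [/\ inter_matrix R d b c *m u = 0,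
        u ord0 ord0 = 1,
        (0 < d)%N -> u (inord 1) ord0 = 0,
        u ord_max ord0 = (-1) ^+ (d./2) &
        forall v : 'cV[R]_d.+1, inter_matrix R d b c *m v = 0 ->
          exists k : R, v = k *: u].
Proof.
move=> [[esym eirr] econ hdiam [hc0 hbd hc1] hreg] hbip hanti hker.
have hA : forall n, (n <= d)%N -> inter_a R b c n = 0.
  move=> [|n] Hn; first by rewrite /inter_a hc0 subrr subr0.
  rewrite /inter_a (F1 esym eirr econ hdiam hreg hc0 hbip (i:=n.+1)) ?natrD; [ring | lia].
have hc : forall n, (0 < n <= d)%N -> (0 < c n)%N :=
  fun n H => F2 esym econ hdiam hreg hc0 H.
have hb : forall n, (n < d)%N -> (0 < b n)%N := fun n H => F3 econ hdiam hreg H.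
have hbc : forall n, (n < d)%N -> b n = c (d - n)%N :=
  fun n H => F4 esym econ hdiam hreg hc0 hanti H.
have Hev : ~~ odd d by apply/negP => Ho; exact: (odd_case hA hc hb Ho hker).
split => //.
exists (\col_(i < d.+1) w R b c i); split.
- exact: u_ker hA hc Hev.
- by rewrite mxE.
- by move=> Hd; rewrite mxE inordK.
- by rewrite mxE /= (@w_d R d b c hc hbc Hev).
- move=> v Hv; exists (V v 0); apply/matrixP => i j.
  by rewrite ord1 !mxE HV (ker_unique hA hc Hv) // -ltnS.
Qed.
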